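(* Let $d\ge1$, $c\in C(d,2,p)$, and $0\le a\le d$. Then the monomial $x^ay^{d-a}$ has carry pattern $\le c$ if and only if $a\in A^c$, where $A^c=\{a: 0\le a\le d,\ \mathrm{Cont}(a_{[t_r,t_{r+1})})\le\mathrm{Cont}(\delta_{t_r})\text{ for all }0\le r\le\ell\}$.
   Context: $p$ prime. Base-$p$ expansion $d=\sum_{j=0}^Md_jp^j$, $d_M\ne0$, digits in $[0,p-1]$. The carry pattern $(c_1,\dots,c_M)$ of $x^ay^b$ ($a+b=d$) is determined by $\sum_{j<\ell}(a_j+b_j)p^j=c_\ell p^\ell+\sum_{j<\ell}d_jp^j$ for $1\le\ell\le M$ ($c_i=0$ for $i<1$, $i>M$). $C(d,2,p)$ is the set of such carry patterns, ordered componentwise. $\mathcal Z(c,d)=\{0\le k\le M: c_k=0,\ (c_{k-1},d_{k-1})\ne(0,p-1)\}$, with the convention $0\in\mathcal Z(c,d)$, written $\{0=t_0<\dots<t_\ell\}$, and $t_{\ell+1}=M+1$. For an integer $a\ge0$ with base-$p$ digits $a_j$, $a_{[t_r,t_{r+1})}=(a_{t_r},\dots,a_{t_{r+1}-1})$ and $\mathrm{Cont}(a_{[t_r,t_{r+1})})=\sum_{k=t_r}^{t_{r+1}-1}a_kp^{k-t_r}$; $\delta_{t_r}=d_{[t_r,t_{r+1})}$. *)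

(* Defs.v *)
From mathcomp Require Import all_boot.
Set Implicit Arguments. Unset Strict Implicit. Unset Printing Implicit Defensive.

Definition digit (p n j : nat) : nat := (n %/ p ^ j) %% p.

Definition topidx (p d : nat) : nat := trunc_log p d.

(* Carry c_l of x^a y^b with b = d - a, for 1 <= l <= M, given by
   sum_{j<l} (a_j + b_j) p^j = c_l p^l + sum_{j<l} d_j p^j. *)
Definition carry (p d a l : nat) : nat :=
  ((\sum_(0 <= j < l) (digit p a j + digit p (d - a) j) * p ^ j)
     - \sum_(0 <= j < l) digit p d j * p ^ j) %/ p ^ l.

Definition carry_pattern (p d a : nat) : seq nat :=
  [seq carry p d a l | l <- iota 1 (topidx p d)].

Definition carry_patterns (p d : nat) : seq (seq nat) :=
  [seq carry_pattern p d a | a <- iota 0 d.+1].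

Definition pat_le (c c' : seq nat) : bool := all2 leq c c'.

(* c_k with the convention c_k = 0 for k < 1 or k > M *)
Definition cget (c : seq nat) (k : nat) : nat :=
  if k is k'.+1 then nth 0 c k' else 0.

(* Z(c,d), as the increasing list t_0 = 0 < t_1 < ... < t_ell *)
Definition Zset (p d : nat) (c : seq nat) : seq nat :=
  [seq k <- iota 0 (topidx p d).+1 |
     (k == 0) ||
     ((cget c k == 0) && ~~ ((cget c k.-1 == 0) && (digit p d k.-1 == p.-1)))].

Definition Cont (p a s e : nat) : nat :=
  \sum_(s <= k < e) digit p a k * p ^ (k - s).

Definition in_Ac (p d : nat) (c : seq nat) (a : nat) : Prop :=
  a <= d /\
  let t := Zset p d c in
  forall r, r < size t ->
    Cont p a (nth 0 t r) (nth (topidx p d).+1 t r.+1)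
      <= Cont p d (nth 0 t r) (nth (topidx p d).+1 t r.+1).

(* Main.v *)
Require Import Defs.
From mathcomp Require Import all_boot zify.

Lemma modn_split n m q : 0 < m -> 0 < q -> n %% (m * q) = n %% m + ((n %/ m) %% q) * m.
Proof.
move=> m0 q0.
have e : n = (n %/ m %/ q) * (m * q) + ((n %/ m) %% q * m + n %% m).
  rewrite {1}(divn_eq n m) {1}(divn_eq (n %/ m) q) mulnDl addnA mulnA.
  by rewrite -!mulnA (mulnC q m).
rewrite {1}e modnMDl modn_small; first by rewrite addnC.
have h1 := ltn_pmod n m0. have h2 := ltn_pmod (n %/ m) q0.
have : ((n %/ m) %% q).+1 * m <= q * m by rewrite leq_mul2r h2 orbT.
rewrite mulSn => H; rewrite [m * q]mulnC; lia.
Qed.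

Lemma sum_digits p n l : 0 < p -> \sum_(0 <= j < l) digit p n j * p ^ j = n %% p ^ l.
Proof.
move=> p0; elim: l => [|l IH]; first by rewrite big_geq // modn1.
rewrite big_nat_recr //= IH expnSr modn_split ?expn_gt0 ?p0 // mulnC.
Qed.

Lemma sub_mod a d m : a <= d -> 0 < m ->
  (d - a) %% m = if a %% m <= d %% m then d %% m - a %% m else m + d %% m - a %% m.
Proof.
move=> ad m0.
have ea := divn_eq a m; have ed := divn_eq d m.
have ra := ltn_pmod a m0; have rd := ltn_pmod d m0.
have qq : a %/ m <= d %/ m by apply: leq_div2r.
have qm : a %/ m * m <= d %/ m * m by rewrite leq_mul2r qq orbT.
set qa := a %/ m in ea qq qm *; set qd := d %/ m in ed qq qm *.
set xa := a %% m in ea ra *; set xd := d %% m in ed rd *.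
case: ifP => h.
  have e : d - a = (qd - qa) * m + (xd - xa).
    rewrite mulnBl; move: qm; rewrite {1}ea {1}ed. lia.
  by rewrite e modnMDl modn_small //; lia.
have lt : qa < qd.
  rewrite ltn_neqAle qq andbT; apply/negP => /eqP E.
  move: ad h; rewrite ea ed E; lia.
have qm2 : qa.+1 * m <= qd * m by rewrite leq_mul2r lt orbT.
have e : d - a = (qd - qa.+1) * m + (m + xd - xa).
  rewrite mulnBl; move: qm2; rewrite mulSn {1}ea {1}ed; lia.
by rewrite e modnMDl modn_small //; lia.
Qed.

Lemma carryE p d a l : 0 < p -> a <= d ->
  carry p d a l = (d %% p ^ l < a %% p ^ l).
Proof.
move=> p0 ad; have pl : 0 < p ^ l by rewrite expn_gt0 p0.
rewrite /carry.
under eq_bigr do rewrite mulnDl.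
rewrite big_split /= !sum_digits // sub_mod ?expn_gt0 ?p0 //.
case: ifP => h.
  have -> : a %% p ^ l + (d %% p ^ l - a %% p ^ l) - d %% p ^ l = 0 by lia.
  by rewrite div0n ltnNge h.
have -> : a %% p ^ l + (p ^ l + d %% p ^ l - a %% p ^ l) - d %% p ^ l = p ^ l.
  have := ltn_pmod d pl; lia.
by rewrite divnn pl ltnNge h.
Qed.

Lemma ContE p n s e : 0 < p -> s <= e -> Cont p n s e = (n %% p ^ e) %/ p ^ s.
Proof.
move=> p0 se; have ps : 0 < p ^ s by rewrite expn_gt0 p0.
rewrite -sum_digits // (big_cat_nat (leq0n s) se) /= sum_digits //.
have -> : \sum_(s <= j < e) digit p n j * p ^ j = Cont p n s e * p ^ s.
  rewrite /Cont mulnC big_distrr /=; apply: eq_big_nat => k /andP[sk ke].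
  by rewrite mulnCA -expnD subnKC.
by rewrite addnC divnMDl // divn_small ?addn0 // ltn_pmod.
Qed.

Lemma Cont_le p a d s e : 0 < p -> a %% p ^ e <= d %% p ^ e -> Cont p a s e <= Cont p d s e.
Proof.
move=> p0 h; case: (leqP s e) => se.
  by rewrite !ContE // leq_div2r.
by rewrite /Cont !big_geq // ltnW.
Qed.

Lemma blockP p a d s e : 0 < p -> s <= e -> a %% p ^ s <= d %% p ^ s ->
  Cont p a s e <= Cont p d s e -> a %% p ^ e <= d %% p ^ e.
Proof.
move=> p0 se hs; rewrite !ContE // => hb.
have dv : p ^ s %| p ^ e by apply: dvdn_exp2l.
have ma : a %% p ^ e = (a %% p ^ e) %/ p ^ s * p ^ s + a %% p ^ s.
  by rewrite {1}(divn_eq (a %% p ^ e) (p ^ s)) (modn_dvdm _ dv).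
have md : d %% p ^ e = (d %% p ^ e) %/ p ^ s * p ^ s + d %% p ^ s.
  by rewrite {1}(divn_eq (d %% p ^ e) (p ^ s)) (modn_dvdm _ dv).
have hm : (a %% p ^ e) %/ p ^ s * p ^ s <= (d %% p ^ e) %/ p ^ s * p ^ s.
  by rewrite leq_mul2r hb orbT.
rewrite ma md; lia.
Qed.

Lemma stepP p a d l : 0 < p -> a %% p ^ l <= d %% p ^ l -> digit p d l = p.-1 ->
  a %% p ^ l.+1 <= d %% p ^ l.+1.
Proof.
move=> p0 h hd; have pl : 0 < p ^ l by rewrite expn_gt0 p0.
rewrite expnSr !modn_split // -/(digit p a l) -/(digit p d l) hd.
have : digit p a l * p ^ l <= p.-1 * p ^ l.
  by rewrite leq_mul2r -ltnS prednK // ltn_pmod // orbT.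
lia.
Qed.

Lemma all2_map (f g : nat -> nat) s :
  all2 leq (map f s) (map g s) = all (fun x => f x <= g x) s.
Proof. by elim: s => //= x s ->. Qed.

Theorem mainTheorem11 (p d : nat) (c : seq nat) (a : nat) :
  prime p -> 1 <= d -> c \in carry_patterns p d -> a <= d ->
  (pat_le (carry_pattern p d a) c <-> in_Ac p d c a).
Proof.
move=> pp d1 cin ad.
have p1 := prime_gt1 pp; have p0 := prime_gt0 pp.
have dlt : d < p ^ (topidx p d).+1 by apply: trunc_log_ltn.
set M := topidx p d in dlt *.
have PM : a %% p ^ M.+1 <= d %% p ^ M.+1.
  by rewrite !modn_small // (leq_ltn_trans ad).
have P0 : a %% p ^ 0 <= d %% p ^ 0 by rewrite expn0 !modn1.
case/mapP: cin => a' a'in ->.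
have a'd : a' <= d by move: a'in; rewrite mem_iota.
set c0 := carry_pattern p d a'.
have cg : forall k, 0 < k <= M -> cget c0 k = carry p d a' k.
  case=> // k /andP[_ kM].
  by rewrite /cget /c0 /carry_pattern (nth_map 0) ?size_iota // nth_iota.
have patP : pat_le (carry_pattern p d a) c0 <->
    (forall l, 0 < l <= M -> carry p d a' l = 0 -> a %% p ^ l <= d %% p ^ l).
  rewrite /pat_le /c0 /carry_pattern all2_map; split.
    move=> /allP H l hl hc; have := H l; rewrite mem_iota add1n ltnS => /(_ hl).
    by rewrite hc carryE // leqn0 eqb0 -leqNgt.
  move=> H; apply/allP => l; rewrite mem_iota add1n ltnS => hl.
  case: (boolP (carry p d a' l == 0)) => [/eqP hc | hc].
    by rewrite hc carryE // leqn0 eqb0 -leqNgt H.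
  by rewrite (leq_trans _ (neq0_lt0n (negbTE hc))) // carryE // leq_b1.
set t := Zset p d c0.
have memt : forall k, (k \in t) = (k <= M) && ((k == 0) ||
     ((cget c0 k == 0) && ~~ ((cget c0 k.-1 == 0) && (digit p d k.-1 == p.-1)))).
  by move=> k; rewrite /t /Zset mem_filter mem_iota /= ltnS andbC.
rewrite patP /in_Ac -/t; split.
  move=> H; split => // r rlt; apply: Cont_le => //.
  case: (ltnP r.+1 (size t)) => h; last by rewrite nth_default.
  have := mem_nth M.+1 h; rewrite memt.
  set e := nth M.+1 t r.+1.
  case: (posnP e) => [-> //| e0] /andP[eM /andP[/eqP ce _]].
  by apply: H; [rewrite e0 eM | rewrite -cg // e0 eM].
case=> _ H.
have srt : sorted ltn t by apply: sorted_filter; [exact: ltn_trans | exact: iota_ltn_sorted].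
have t0 : nth 0 t 0 = 0 by rewrite /t /Zset /=.
have Pt : forall r, r < size t -> a %% p ^ (nth 0 t r) <= d %% p ^ (nth 0 t r).
  elim=> [|r IH] hr; first by rewrite t0.
  have hr' : r < size t by apply: ltnW.
  have lt : nth 0 t r < nth 0 t r.+1 by apply: (sorted_ltn_nth ltn_trans) => //.
  apply: (@blockP p a d _ _ p0 (ltnW lt) (IH hr')).
  by have := H r hr'; rewrite (set_nth_default 0 M.+1 hr).
have memP : forall k, k \in t -> a %% p ^ k <= d %% p ^ k.
  by move=> k kt; rewrite -(nth_index 0 kt); apply: Pt; rewrite index_mem.
elim=> [//|l IH] /andP[_ hl] hc.
case: (boolP (l.+1 \in t)) => [/memP // | nin].
have cl1 : cget c0 l.+1 = 0 by rewrite cg ?hl.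
move: nin; rewrite memt hl cl1 /= negbK => /andP[/eqP cl /eqP dl].
apply: stepP => //.
case: (posnP l) => [-> //| l0].
apply: IH; first by rewrite l0 ltnW.
by rewrite -cg // l0 ltnW.
Qed.
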